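(* Let $\Sigma$ be the discrete-time LTI system $x_{k+1}=Ax_k+Bu_k$, $y_k=Cx_k+Du_k$ with real matrices of dimensions $n_x\times n_x$, $n_x\times n_u$, $n_y\times n_x$, $n_y\times n_u$ and $(A,B)$ controllable. Let $Q,M\in\mathbb{N}_{\geqslant 1}$, $\bm{\omega}=(\omega_0,\dots,\omega_{M-1})$ with $\omega_m\in[0,\pi)$, and let $\{U^{d,i}(\omega),Y^{d,i}(\omega)\}$, $i\in\{1,\dots,Q\}$, be input-output spectra of $\Sigma$ with sampled sequences $\bm{U}^{d,i}$, $\bm{Y}^{d,i}$ at the frequencies $\bm{\omega}$. Let $L_0,L\in\mathbb{N}$ with $n_x\leqslant L_0\leqslant L$, and suppose $\bm{U}^{d,i}$, $i\in\{1,\dots,Q\}$, are CPE of order $L+n_x$. Let $\{\bm{u}^{\mathrm{ini}},\bm{y}^{\mathrm{ini}}\}$ be a real input-output trajectory of $\Sigma$ of length $L_0$. Suppose $\{\bm{u},\bm{y}\}$ is a real input-output trajectory of $\Sigma$ of length $L$ with $(u_k,y_k)=(u^{\mathrm{ini}}_k,y^{\mathrm{ini}}_k)$ for $k=0,\dots,L_0-1$. Then there exists $g\in\mathbb{R}^{2MQ}$ such that $$\begin{bmatrix}u^{\mathrm{ini}}_{[0,L_0-1]}\\ u_{[L_0,L-1]}\\ y^{\mathrm{ini}}_{[0,L_0-1]}\end{bmatrix}=\begin{bmatrix}\Gamma_L(\{\bm{U}^{d,i}\}_{i=1}^Q,\bm{\omega})\\ \Gamma_{L_0}(\{\bm{Y}^{d,i}\}_{i=1}^Q,\bm{\omega})\end{bmatrix}g,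 \qquad (\ast)$$ and moreover, for any $g\in\mathbb{R}^{2MQ}$ satisfying $(\ast)$, the output satisfies $y_{[0,L-1]}=\Gamma_L(\{\bm{Y}^{d,i}\}_{i=1}^Q,\bm{\omega})g$.
   Context: $j=\sqrt{-1}$; $^*$ denotes entrywise complex conjugation; $\otimes$ is the Kronecker product; $\mathbb{W}=[-\pi,\pi)$. For a sequence $\bm{x}$, $x_{[n,m]}=(x_n,\dots,x_m)$ is the vertical stack of its entries. Input-output trajectory: real sequences $\{\bm{u},\bm{y}\}$ of length $N$ form an input-output trajectory of $\Sigma$ if there is a real state sequence $\bm{x}$ of length $N$ with $x_{k+1}=Ax_k+Bu_k$ for $k=0,\dots,N-2$ and $y_k=Cx_k+Du_k$ for $k=0,\dots,N-1$. Spectra: a spectrum is a function $V:\mathbb{W}\to\mathbb{C}^{n}$ with $V(\omega)=V^*(-\omega)$ for all $\omega$. A pair $\{U(\omega),Y(\omega)\}$ of such spectra (values in $\mathbb{C}^{n_u},\mathbb{C}^{n_y}$) is an input-output spectrum of $\Sigma$ if there exists a spectrum $X(\omega)\in\mathbb{C}^{n_x}$ with $e^{j\omega}X(\omega)=AX(\omega)+BU(\omega)$ and $Y(\omega)=CX(\omega)+DU(\omega)$ for all $\omega\in\mathbb{W}$. Sampled sequences: $\bm{U}^{d,i}=(U^{d,i}(\omega_0),\dots,U^{d,i}(\omega_{M-1}))$ and likewise for $\bm{Y}^{d,i}$. $W_L(\omega)=\begin{bmatrix}1 & e^{j\omega} & \cdots & e^{j\omega(L-1)}\end{bmatrix}^\top$.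 For $\bm{V}=(V_0,\dots,V_{M-1})$, $V_m\in\mathbb{C}^{n_v}$: $F_L(\bm{V},\bm{\omega})=\begin{bmatrix}W_L(\omega_0)\otimes V_0 & \cdots & W_L(\omega_{M-1})\otimes V_{M-1}\end{bmatrix}\in\mathbb{C}^{n_vL\times M}$. For sequences $\bm{V}^1,\dots,\bm{V}^Q$, the real $n_vL\times 2MQ$ matrix $\Gamma_L(\{\bm{V}^{i}\}_{i=1}^Q,\bm{\omega})=\begin{bmatrix}\operatorname{Re}F_L(\bm{V}^{1},\bm{\omega}) & \cdots & \operatorname{Re}F_L(\bm{V}^{Q},\bm{\omega}) & \operatorname{Im}F_L(\bm{V}^{1},\bm{\omega}) & \cdots & \operatorname{Im}F_L(\bm{V}^{Q},\bm{\omega})\end{bmatrix}$. Frequency-domain CPE: sequences $\bm{V}^i\in(\mathbb{C}^{n_v})^M$, $i=1,\dots,Q$, of samples $V^i_m=V^i(\omega_m)$ of symmetric spectra at frequencies $\omega_m\in[0,\pi)$ are collectively persistently exciting of order $L$ if $\begin{bmatrix}F_L(\bm{V}^{1},\bm{\omega}) & \cdots & F_L(\bm{V}^{Q},\bm{\omega}) & F_L^*(\bm{V}^{1},\bm{\omega}) & \cdots & F_L^*(\bm{V}^{Q},\bm{\omega})\end{bmatrix}$ has full row rank $n_vL$. *)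

(* Defs.v *)
From HB Require Import structures.
From mathcomp Require Import all_boot all_order all_algebra.
From mathcomp Require Import reals trigo.
From mathcomp Require Import complex.
Set Implicit Arguments. Unset Strict Implicit. Unset Printing Implicit Defensive.
Import Order.TTheory GRing.Theory Num.Theory.
Local Open Scope ring_scope.

Section Defs.
Variable R : realType.
Local Notation C := R[i].

Definition expj (w : R) : C := Complex (cos w) (sin w).

Definition cmx m n (A : 'M[R]_(m, n)) : 'M[C]_(m, n) := map_mx (real_complex R) A.

Definition conjmx m n (A : 'M[C]_(m, n)) : 'M[C]_(m, n) := map_mx (@conjc R) A.

Definition inW (w : R) : Prop := - pi <= w < pi.

Definition spectrum n (V : R -> 'cV[C]_n) : Prop :=
  forall w, inW w -> inW (- w) -> V w = conjmx (V (- w)).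

Definition controllable nx nu (A : 'M[R]_nx) (B : 'M[R]_(nx, nu)) : bool :=
  \rank (\mxrow_(k < nx) (A ^+ k *m B)) == nx.

Definition io_trajectory nx nu ny (A : 'M[R]_nx) (B : 'M[R]_(nx, nu))
  (Cm : 'M[R]_(ny, nx)) (D : 'M[R]_(ny, nu)) (N : nat)
  (u : nat -> 'cV[R]_nu) (y : nat -> 'cV[R]_ny) : Prop :=
  exists x : nat -> 'cV[R]_nx,
    (forall k, (k.+2 <= N)%N -> x k.+1 = A *m x k + B *m u k) /\
    (forall k, (k < N)%N -> y k = Cm *m x k + D *m u k).

Definition io_spectrum nx nu ny (A : 'M[R]_nx) (B : 'M[R]_(nx, nu))
  (Cm : 'M[R]_(ny, nx)) (D : 'M[R]_(ny, nu))
  (U : R -> 'cV[C]_nu) (Y : R -> 'cV[C]_ny) : Prop :=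
  spectrum U /\ spectrum Y /\
  exists X : R -> 'cV[C]_nx, spectrum X /\
    forall w, inW w ->
      expj w *: X w = cmx A *m X w + cmx B *m U w /\
      Y w = cmx Cm *m X w + cmx D *m U w.

(* stacking x_a, ..., x_(a+L-1) into a column of height L*n
   (block l occupies rows l*n, ..., l*n+n-1) *)
Definition stack (K : Type) L n (x : nat -> 'cV[K]_n) (a : nat) : 'cV[K]_(L * n) :=
  (mxvec (\matrix_(l < L, p < n) x (a + l)%N p 0))^T.

(* F_L(V, w) = [W_L(w_0) (x) V_0 ... W_L(w_(M-1)) (x) V_(M-1)] *)
Definition FL L M n (V : 'I_M -> 'cV[C]_n) (w : 'I_M -> R) : 'M[C]_(L * n, M) :=
  \matrix_(r < L * n, m < M)
     (mxvec (\matrix_(l < L, p < n) (expj (w m) ^+ l * V m p 0))) 0 r.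

Definition GammaL L M Q n (V : 'I_Q -> 'I_M -> 'cV[C]_n) (w : 'I_M -> R)
  : 'M[R]_(L * n, \sum_(i < Q) M + \sum_(i < Q) M) :=
  row_mx (\mxrow_(i < Q) map_mx (@complex.Re R) (FL L (V i) w))
         (\mxrow_(i < Q) map_mx (@complex.Im R) (FL L (V i) w)).

Definition CPE L M Q n (V : 'I_Q -> 'I_M -> 'cV[C]_n) (w : 'I_M -> R) : bool :=
  \rank (row_mx (\mxrow_(i < Q) FL L (V i) w)
                (\mxrow_(i < Q) conjmx (FL L (V i) w))) == (L * n)%N.

End Defs.

(* Main.v *)
Require Import Defs.
From HB Require Import structures.
From mathcomp Require Import all_boot all_order all_algebra.
From mathcomp Require Import reals trigo.
From mathcomp Require Import complex.
From mathcomp Require Import ring zify.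
From Stdlib Require Import ClassicalEpsilon.
Import Order.TTheory GRing.Theory Num.Theory.
Local Open Scope ring_scope.
Set Implicit Arguments. Unset Strict Implicit. Unset Printing Implicit Defensive.

Section Aux.
Variable R : realType.
Local Notation C := R[i].
Local Notation Re := (@complex.Re R).
Local Notation Im := (@complex.Im R).
Local Notation RC := (real_complex R).

Lemma ReD (x y : C) : Re (x + y) = Re x + Re y. Proof. by case: x; case: y. Qed.
Lemma Re0 : Re 0 = 0. Proof. by []. Qed.
Lemma Re_sum (I : Type) (r : seq I) (P : pred I) (F : I -> C) :
  Re (\sum_(i <- r | P i) F i) = \sum_(i <- r | P i) Re (F i).
Proof. exact: (big_morph _ ReD Re0). Qed.
Lemma ReRM (a : R) (z : C) : Re (RC a * z) = a * Re z.
Proof. by case: z => x y /=; rewrite mul0r subr0. Qed.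
Lemma ImRe (z : C) : Im z = Re (- 'i * z).
Proof. by case: z => x y /=; ring. Qed.
Lemma Re1 (z : C) : Re z = Re (1 * z). Proof. by rewrite mul1r. Qed.
Lemma RC_inj : injective RC. Proof. by move=> x y []. Qed.
Lemma complex_eq0 (z : C) : Re z = 0 -> Im z = 0 -> z = 0.
Proof. by case: z => x y /= -> ->. Qed.

Lemma cmxM m n p (A : 'M[R]_(m, n)) (B : 'M[R]_(n, p)) : cmx (A *m B) = cmx A *m cmx B.
Proof. exact: map_mxM. Qed.
Lemma cmxD m n (A B : 'M[R]_(m, n)) : cmx (A + B) = cmx A + cmx B.
Proof. exact: map_mxD. Qed.
Lemma cmxN m n (A : 'M[R]_(m, n)) : cmx (- A) = - cmx A.
Proof. exact: map_mxN. Qed.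
Lemma cmx0 m n : cmx (0 : 'M[R]_(m, n)) = 0.
Proof. exact: map_mx0. Qed.
Lemma cmx_sum m n (I : Type) (r : seq I) (P : pred I) (F : I -> 'M[R]_(m, n)) :
  cmx (\sum_(i <- r | P i) F i) = \sum_(i <- r | P i) cmx (F i).
Proof. exact: map_mx_sum. Qed.
Lemma cmxZ m n a (A : 'M[R]_(m, n)) : cmx (a *: A) = RC a *: cmx A.
Proof. by apply/matrixP => i j; rewrite !mxE rmorphM. Qed.
Lemma cmxX n (A : 'M[R]_n) k : cmx (A ^+ k) = cmx A ^+ k.
Proof.
elim: k => [|k IH]; first by apply/matrixP => i j; rewrite !mxE; case: (i == j).
by rewrite !exprS cmxM IH.
Qed.
Lemma cmx_inj m n : injective (@cmx R m n).
Proof. exact: map_mx_inj. Qed.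

Definition reM m n (Z : 'M[C]_(m, n)) : 'M[R]_(m, n) := map_mx Re Z.
Lemma reMD m n (Z1 Z2 : 'M[C]_(m, n)) : reM (Z1 + Z2) = reM Z1 + reM Z2.
Proof. by apply/matrixP => i j; rewrite !mxE ReD. Qed.
Lemma reM_cmx m n p (A : 'M[R]_(m, n)) (Z : 'M[C]_(n, p)) : reM (cmx A *m Z) = A *m reM Z.
Proof.
apply/matrixP => i j; rewrite !mxE Re_sum; apply: eq_bigr => k _.
by rewrite !mxE ReRM.
Qed.
Lemma reM_scale m n (a : R) (Z : 'M[C]_(m, n)) : reM (RC a *: Z) = a *: reM Z.
Proof. by apply/matrixP => i j; rewrite !mxE ReRM. Qed.

Lemma sum_mxvec (V : nmodType) m n (F : 'I_(m * n) -> V) :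
  \sum_(r < m * n) F r = \sum_(i < m) \sum_(j < n) F (mxvec_index i j).
Proof.
rewrite (reindex _ (curry_mxvec_bij _ _)) /= pair_bigA /=.
by apply: eq_bigr => [[i j]].
Qed.

Lemma stackE (K : Type) L n (x : nat -> 'cV[K]_n) a l p :
  stack L x a (mxvec_index l p) 0 = x (a + l)%N p 0.
Proof. by rewrite /stack mxE mxvecE mxE. Qed.

Lemma stack_ext (K : Type) L n (x x' : nat -> 'cV[K]_n) a :
  (forall k, (k < L)%N -> x (a + k)%N = x' (a + k)%N) -> stack L x a = stack L x' a.
Proof.
move=> h; apply/matrixP => r j; rewrite (ord1 j); case/mxvec_indexP: r => l p.
by rewrite !stackE h.
Qed.

Lemma stack_sum (K : nmodType) L n (I : Type) (s : seq I) (P : pred I)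
  (f : I -> nat -> 'cV[K]_n) a :
  stack L (fun k => \sum_(c <- s | P c) f c k) a = \sum_(c <- s | P c) stack L (f c) a.
Proof.
apply/matrixP => r j; rewrite (ord1 j); case/mxvec_indexP: r => l p.
rewrite stackE !summxE; apply: eq_bigr => c _; by rewrite stackE.
Qed.

Lemma stack_scale (K : pzRingType) L n (b : K) (x : nat -> 'cV[K]_n) a :
  stack L (fun k => b *: x k) a = b *: stack L x a.
Proof.
apply/matrixP => r j; rewrite (ord1 j); case/mxvec_indexP: r => l p.
by rewrite stackE [RHS]mxE stackE mxE.
Qed.

Lemma stack_inj (K : Type) L n (x x' : nat -> 'cV[K]_n) :
  stack L x 0 = stack L x' 0 -> forall k, (k < L)%N -> x k = x' k.
Proof.
move=> h k hk; apply/matrixP => p j; rewrite (ord1 j).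
have := congr1 (fun M : 'M[K]_(L * n, 1) => M (mxvec_index (Ordinal hk) p) 0) h.
by rewrite !stackE.
Qed.

Lemma stack_dot (K : pzRingType) L n (v : 'rV[K]_(L * n)) (x : nat -> 'cV[K]_n) :
  v *m stack L x 0 = \sum_(l < L) (\row_p v 0 (mxvec_index l p)) *m x l.
Proof.
apply/matrixP => i j; rewrite (ord1 i) (ord1 j) !mxE summxE sum_mxvec.
apply: eq_bigr => l _; rewrite !mxE; apply: eq_bigr => p _.
by rewrite stackE !mxE.
Qed.

Lemma stack_rowE (K : Type) L n (v : 'rV[K]_(L * n)) :
  v = mxvec (\matrix_(l < L, p < n) v 0 (mxvec_index l p)).
Proof.
apply/matrixP => i r; rewrite (ord1 i); case/mxvec_indexP: r => l p.
by rewrite mxvecE mxE.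
Qed.

Section Cols.
Variables (Q M : nat).
Local Notation N1 := (\sum_(i < Q) M)%N.
Definition sp (c : 'I_(N1 + N1)) : 'I_N1 :=
  match split c with inl a => a | inr a => a end.
Definition ci (c : 'I_(N1 + N1)) : 'I_Q := @tagnat.sig1 Q (fun=> M) (sp c).
Definition cm (c : 'I_(N1 + N1)) : 'I_M := @tagnat.sig2 Q (fun=> M) (sp c).
Definition ph (c : 'I_(N1 + N1)) : C := if split c is inl _ then 1 else - 'i.

Lemma colG L n (V : 'I_Q -> 'I_M -> 'cV[C]_n) (w : 'I_M -> R) c :
  col c (GammaL L V w) =
  stack L (fun k => reM ((ph c * expj (w (cm c)) ^+ k) *: V (ci c) (cm c))) 0.
Proof.
apply/colP => r; case/mxvec_indexP: r => l p.
rewrite stackE mxE /GammaL /ci /cm /ph /sp.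
rewrite [in LHS]mxE; case: (split c) => a; rewrite !mxE mxvecE !mxE.
  by rewrite mul1r add0n.
by rewrite ImRe mulrA add0n.

Qed.

Definition rk (i : 'I_Q) (m : 'I_M) : 'I_N1 := @tagnat.Rank Q (fun=> M) i m.
Lemma rk1 i m : @tagnat.sig1 Q (fun=> M) (rk i m) = i.
Proof. exact: tagnat.Rank1K. Qed.
Lemma rk2 i m : @tagnat.sig2 Q (fun=> M) (rk i m) = m.
Proof. by apply: val_inj; rewrite /rk tagnat.Rank2K. Qed.

Lemma col_l i m : [/\ ci (lshift N1 (rk i m)) = i, cm (lshift N1 (rk i m)) = m
  & ph (lshift N1 (rk i m)) = 1].
Proof.
have E : split (lshift N1 (rk i m)) = inl (rk i m) := unsplitK (inl _ _).
by rewrite /ci /cm /ph /sp E rk1 rk2.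
Qed.
Lemma col_r i m : [/\ ci (rshift N1 (rk i m)) = i, cm (rshift N1 (rk i m)) = m
  & ph (rshift N1 (rk i m)) = - 'i].
Proof.
have E : split (rshift N1 (rk i m)) = inr (rk i m) := unsplitK (inr _ _).
by rewrite /ci /cm /ph /sp E rk1 rk2.
Qed.

Variable (w : 'I_M -> R).
Definition traj n (V : 'I_Q -> 'I_M -> 'cV[C]_n) (g : 'cV[R]_(N1 + N1)) (k : nat) : 'cV[R]_n :=
  \sum_c g c 0 *: reM ((ph c * expj (w (cm c)) ^+ k) *: V (ci c) (cm c)).

Lemma mulmx_cols (K : comPzRingType) m p (A : 'M[K]_(m, p)) (g : 'cV[K]_p) :
  A *m g = \sum_c g c 0 *: col c A.
Proof.
apply/matrixP => i j; rewrite (ord1 j) !mxE summxE; apply: eq_bigr => c _.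
by rewrite !mxE mulrC.
Qed.

Lemma Gmul L n (V : 'I_Q -> 'I_M -> 'cV[C]_n) g :
  GammaL L V w *m g = stack L (traj V g) 0.
Proof.
rewrite mulmx_cols /traj stack_sum; apply: eq_bigr => c _.
by rewrite colG stack_scale.
Qed.

Lemma traj_dyn nx nu (A : 'M[R]_nx) (B : 'M[R]_(nx, nu)) X U g k :
  (forall i m, expj (w m) *: X i m = cmx A *m X i m + cmx B *m U i m) ->
  traj X g k.+1 = A *m traj X g k + B *m traj U g k.
Proof.
move=> h; rewrite /traj !mulmx_sumr.
rewrite (eq_bigr (fun c => A *m (g c 0 *: reM ((ph c * expj (w (cm c)) ^+ k) *: X (ci c) (cm c)))
  + B *m (g c 0 *: reM ((ph c * expj (w (cm c)) ^+ k) *: U (ci c) (cm c))))); first by rewrite big_split.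
move=> c _; rewrite exprSr mulrA -[in LHS]scalerA h scalerDr !scalemxAr reMD !reM_cmx.
by rewrite scalerDr !scalemxAr.
Qed.

Lemma traj_out nx nu ny (Cm : 'M[R]_(ny, nx)) (D : 'M[R]_(ny, nu)) X U Y g k :
  (forall i m, Y i m = cmx Cm *m X i m + cmx D *m U i m) ->
  traj Y g k = Cm *m traj X g k + D *m traj U g k.
Proof.
move=> h; rewrite /traj !mulmx_sumr.
rewrite (eq_bigr (fun c => Cm *m (g c 0 *: reM ((ph c * expj (w (cm c)) ^+ k) *: X (ci c) (cm c)))
  + D *m (g c 0 *: reM ((ph c * expj (w (cm c)) ^+ k) *: U (ci c) (cm c))))); first by rewrite big_split.
move=> c _; rewrite h scalerDr !scalemxAr reMD !reM_cmx.
by rewrite scalerDr !scalemxAr.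
Qed.
End Cols.

Definition ev (z : C) (p : {poly R}) : C := (map_poly RC p).[z].
Lemma evD z p q : ev z (p + q) = ev z p + ev z q.
Proof. by rewrite /ev rmorphD hornerD. Qed.
Lemma evM z p q : ev z (p * q) = ev z p * ev z q.
Proof. by rewrite /ev rmorphM hornerM. Qed.
Lemma evN z p : ev z (- p) = - ev z p.
Proof. by rewrite /ev rmorphN hornerN. Qed.
Lemma evC z c : ev z c%:P = RC c.
Proof. by rewrite /ev map_polyC hornerC. Qed.
Lemma evX z : ev z 'X = z.
Proof. by rewrite /ev map_polyX hornerX. Qed.
Lemma ev0 z : ev z 0 = 0.
Proof. by rewrite /ev rmorph0 horner0. Qed.
Lemma evE z (p : {poly R}) N : (size p <= N)%N -> ev z p = \sum_(k < N) RC p`_k * z ^+ k.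
Proof.
move=> h; rewrite /ev (horner_coef_wide _ (_ : size _ <= N)%N) ?size_map_poly //.
by apply: eq_bigr => k _; rewrite coef_map.
Qed.

Lemma L1 n (z : C) (V : 'cV[C]_n) (eta : nat -> 'rV[R]_n) l :
  (\sum_(k < l) cmx (eta k) *m (z ^+ k *: V)) 0 0 =
  \sum_j ev z (\poly_(k < l) eta k 0 j) * V j 0.
Proof.
rewrite summxE.
under eq_bigr => k _ do rewrite -scalemxAr mxE mxE mulr_sumr.
rewrite exchange_big /=; apply: eq_bigr => j _.
rewrite (evE _ (size_poly _ _)) mulr_suml; apply: eq_bigr => k _.
by rewrite coef_poly ltn_ord !mxE; ring.
Qed.


Section Hmx.
Variables (n : nat) (A : 'M[R]_n).
Definition hmx (p : {poly R}) : 'M[R]_n := \sum_(k < size p) p`_k *: A ^+ k.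
Lemma hmx_wide N (p : {poly R}) : (size p <= N)%N -> hmx p = \sum_(k < N) p`_k *: A ^+ k.
Proof.
move=> h; rewrite /hmx (big_ord_widen N (fun k => p`_k *: A ^+ k) h) big_mkcond.
apply: eq_bigr => k _; case: ifP => // /negbT; rewrite -leqNgt => hk.
by rewrite nth_default // scale0r.
Qed.
Lemma hmxD (p q : {poly R}) : hmx (p + q) = hmx p + hmx q.
Proof.
pose N := maxn (size p) (size q).
rewrite (hmx_wide (size_polyD p q)) (hmx_wide (leq_maxl (size p) (size q))) (hmx_wide (leq_maxr (size p) (size q))) -big_split.
by apply: eq_bigr => k _; rewrite coefD scalerDl.
Qed.
Lemma hmx0 : hmx 0 = 0.
Proof. by rewrite /hmx size_poly0 big_ord0. Qed.
Lemma hmxMX (p : {poly R}) : hmx (p * 'X) = hmx p *m A.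
Proof.
rewrite (@hmx_wide (size p).+1 (p * 'X)); last first.
  by apply: (leq_trans (size_polyMleq _ _)); rewrite size_polyX addn2.
rewrite big_ord_recl coefMX eqxx scale0r add0r /hmx mulmx_suml.
by apply: eq_bigr => k _; rewrite coefMX /= /bump leq0n add1n add0n exprSr scalemxAl.
Qed.
Lemma hmxC c : hmx c%:P = c%:M.
Proof.
by rewrite (hmx_wide (size_polyC_leq1 _)) big_ord1 coefC /= expr0 scalemx1.
Qed.
Lemma hmx_comm (p : {poly R}) : hmx p *m A = A *m hmx p.
Proof.
rewrite /hmx mulmx_suml mulmx_sumr; apply: eq_bigr => k _.
rewrite -scalemxAl -scalemxAr; congr (_ *: _).
by rewrite -[_ *m A]/(A ^+ k * A) -exprSr exprS.
Qed.
End Hmx.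

Lemma hmx_CH n (A : 'M[R]_n) : hmx A (char_poly A) = 0.
Proof.
case: n A => [|n] A; first by rewrite [LHS]flatmx0.
have := Cayley_Hamilton A; rewrite /horner_mx /horner_morph.
rewrite horner_coef size_map_poly_id0; last first.
  by rewrite (monicP (char_poly_monic A)); exact: oner_neq0.
move=> <-; apply: eq_bigr => k _.
by rewrite coef_map /= -[_ * _]/(_ *m _) mul_scalar_mx.
Qed.

Section ML.
Variables (nx nu : nat) (A : 'M[R]_nx) (B : 'M[R]_(nx, nu)).
Variables (I : finType) (e : I -> C) (U : I -> 'cV[C]_nu) (X : I -> 'cV[C]_nx).
Hypothesis hdyn : forall p, e p *: X p = cmx A *m X p + cmx B *m U p.

Definition sx (xi : 'rV[R]_nx) p : C := (cmx xi *m X p) 0 0.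
Definition tu (b : 'rV[R]_nu) p : C := (cmx b *m U p) 0 0.

Lemma sxD a b p : sx (a + b) p = sx a p + sx b p.
Proof. by rewrite /sx cmxD mulmxDl mxE. Qed.
Lemma sxZ c a p : sx (c *: a) p = RC c * sx a p.
Proof. by rewrite /sx cmxZ -scalemxAl mxE. Qed.
Lemma tuE b p : tu b p = \sum_j RC (b 0 j) * U p j 0.
Proof. by rewrite /tu mxE; apply: eq_bigr => j _; rewrite mxE. Qed.
Lemma sx_dyn xi p : e p * sx xi p = sx (xi *m A) p + tu (xi *m B) p.
Proof.
rewrite /sx /tu; transitivity ((cmx xi *m (e p *: X p)) 0 0).
  by rewrite -scalemxAr [in RHS]mxE.
by rewrite hdyn mulmxDr !mulmxA -!cmxM mxE.
Qed.

Lemma ILem (pl : {poly R}) : forall xi : 'rV[R]_nx, exists q : 'I_nu -> {poly R},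
  (forall j, (size (q j) <= (size pl).-1)%N) /\
  forall p, ev (e p) pl * sx xi p =
            sx (xi *m hmx A pl) p + \sum_j ev (e p) (q j) * U p j 0.
Proof.
elim/poly_ind: pl => [|pl c IH] xi.
  exists (fun=> 0); split => [j|p]; first by rewrite size_poly0.
  rewrite ev0 mul0r hmx0 mulmx0 /sx cmx0 mul0mx mxE add0r big1 // => j _.
  by rewrite mul0r.
have [q [hq1 hq2]] := IH (xi *m A).
exists (fun j => q j + pl * ((xi *m B) 0 j)%:P); split => [j|p].
  rewrite size_MXaddC; case: eqP => [hp|_].
    have := hq1 j; rewrite hp size_poly0 leqn0 => /eqP hs.
    by rewrite mul0r addr0 hs.
  rewrite /= (leq_trans (size_polyD _ _)) // geq_max (leq_trans (hq1 j)) ?leq_pred //=.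
  apply: (leq_trans (size_polyMleq _ _)).
  by rewrite -subn1 leq_subLR [X in (_ <= X)%N]addnC leq_add2l size_polyC_leq1.
rewrite evD evM evX evC mulrDl -mulrA sx_dyn mulrDr hq2.
rewrite hmxD hmxMX hmxC mulmxDr hmx_comm mulmxA.
rewrite (_ : xi *m c%:M = c *: xi); last by rewrite mul_mx_scalar.
rewrite sxD sxZ tuE mulr_sumr.
under [X in _ = _ + X]eq_bigr => j _ do rewrite evD evM evC mulrDl.
rewrite big_split /=.
under [X in _ = _ + (_ + X)]eq_bigr => j _ do rewrite -mulrA.
ring.
Qed.

Variable Lpe : nat.
Hypothesis hCPE : forall P : 'I_nu -> {poly R}, (forall j, (size (P j) <= Lpe)%N) ->
  (forall p, \sum_j ev (e p) (P j) * U p j 0 = 0) -> forall j, P j = 0.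

Lemma ML l (hl : (l + nx <= Lpe)%N) xi (eta : nat -> 'rV[R]_nu) :
  (forall p, sx xi p + (\sum_(k < l) cmx (eta k) *m (e p ^+ k *: U p)) 0 0 = 0) ->
  forall k, (k < l)%N -> eta k = 0.
Proof.
move=> h.
have [q [hq1 hq2]] := ILem (char_poly A) xi.
pose pe j := \poly_(k < l) eta k 0 j.
have key : forall j, q j + char_poly A * pe j = 0.
  apply: hCPE => [j|p].
    rewrite (leq_trans (size_polyD _ _)) // geq_max; apply/andP; split.
      by rewrite (leq_trans (hq1 j)) // size_char_poly /= (leq_trans _ hl) // leq_addl.
    apply: (leq_trans (size_polyMleq _ _)); rewrite size_char_poly.
    by rewrite addSn /= (leq_trans _ hl) // addnC leq_add2r size_poly.
  have := hq2 p; rewrite hmx_CH mulmx0 /sx cmx0 mul0mx [X in _ = X + _]mxE add0r => hq.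
  have := h p; rewrite L1 => h'.
  have hs : \sum_j ev (e p) (pe j) * U p j 0 = - sx xi p.
    by apply/eqP; rewrite -addr_eq0 addrC h'.
  under eq_bigr => j _ do rewrite evD evM mulrDl -mulrA.
  by rewrite big_split /= -mulr_sumr hs -hq /sx mulrN subrr.
move=> k hk; apply/rowP => j; rewrite mxE.
have : pe j = 0.
  apply/eqP; apply/negPn/negP => hne.
  have e1 : char_poly A * pe j = - q j.
    by apply/eqP; rewrite -addr_eq0 addrC key.
  have := congr1 (fun P : {poly R} => size P) e1; rewrite /= size_polyN size_monicM ?char_poly_monic //.
  rewrite size_char_poly addSn /= => hsz.
  have := hq1 j; rewrite size_char_poly /= -hsz.
  by rewrite -size_poly_gt0 in hne; rewrite -[X in (_ <= X)%N]addn0 leq_add2l leqNgt hne.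
move=> hpe; have := congr1 (fun P : {poly R} => P`_k) hpe; by rewrite /= coef_poly hk coef0.
Qed.

Lemma ML2 (hL : (1 + nx <= Lpe)%N) (hctrb : controllable A B) xi :
  (forall p, sx xi p = 0) -> xi = 0.
Proof.
move=> h0.
have step : forall z : 'rV_nx, (forall p, sx z p = 0) ->
    z *m B = 0 /\ (forall p, sx (z *m A) p = 0).
  move=> z hz.
  have hh : forall p, sx (z *m A) p +
      (\sum_(k < 1) cmx ((fun=> z *m B) k) *m (e p ^+ k *: U p)) 0 0 = 0.
    move=> p; rewrite big_ord1 expr0 scale1r.
    by rewrite -[(cmx (z *m B) *m U p) 0 0]/(tu (z *m B) p) -sx_dyn hz mulr0.
  have hzB : z *m B = 0 := ML (eta := fun=> z *m B) hL hh (ltn0Sn 0).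
  split => // p.
  by have := hh p; rewrite big_ord1 /= hzB cmx0 mul0mx [X in _ + X]mxE addr0.
have all : forall r, forall p, sx (xi *m A ^+ r) p = 0.
  elim => [|r IH]; first by rewrite expr0 mulmx1.
  by rewrite exprSr -[_ * A]/(_ *m A) mulmxA; case: (step _ IH).
have hB : forall r, xi *m A ^+ r *m B = 0 := fun r => (step _ (all r)).1.
apply/eqP; rewrite -(mulmx_free_eq0 _ hctrb) mul_mxrow.
apply/eqP; rewrite -(mxrow0 (q_ := fun=> nu)); apply: eq_mxrow => k.
by rewrite mulmxA hB.
Qed.
End ML.

Lemma CPE_poly Lq n Q M (V : 'I_Q -> 'I_M -> 'cV[C]_n) (w : 'I_M -> R) :
  CPE Lq V w -> forall P : 'I_n -> {poly R}, (forall j, (size (P j) <= Lq)%N) ->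
  (forall i m, \sum_j ev (expj (w m)) (P j) * V i m j 0 = 0) -> forall j, P j = 0.
Proof.
move=> hc P hs h.
pose v : 'rV[R]_(Lq * n) := mxvec (\matrix_(l < Lq, j < n) (P j)`_l).
have hF : forall i, cmx v *m FL Lq (V i) w = 0.
  move=> i; apply/rowP => m; rewrite [RHS]mxE.
  transitivity (\sum_j ev (expj (w m)) (P j) * V i m j 0); last exact: h i m.
  rewrite mxE sum_mxvec.
  under [RHS]eq_bigr => j _ do rewrite (evE _ (hs j)) mulr_suml.
  rewrite exchange_big /=; apply: eq_bigr => l _; apply: eq_bigr => j _.
  by rewrite !mxE !mxvecE !mxE mulrA.
have hFc : forall i, cmx v *m Defs.conjmx (FL Lq (V i) w) = 0.
  move=> i; apply/rowP => m; rewrite [RHS]mxE.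
  have := congr1 (fun M : 'rV_M => (M 0 m)^*%C) (hF i).
  rewrite [in RHS]mxE conjc0 => <-; rewrite !mxE rmorph_sum; apply: eq_bigr => r _.
  by rewrite !mxE rmorphM; congr (_ * _); exact: (esym (conjc_real _)).
have hrow : cmx v *m row_mx (\mxrow_i FL Lq (V i) w) (\mxrow_i Defs.conjmx (FL Lq (V i) w)) = 0.
  rewrite mul_mx_row !mul_mxrow.
  rewrite (eq_mxrow hF) (eq_mxrow hFc) !mxrow0; exact: row_mx0.
have hv : v = 0.
  apply: (@cmx_inj 1 (Lq * n)); rewrite cmx0; apply/eqP.
  by rewrite -(mulmx_free_eq0 _ hc) hrow.
move=> j; apply/polyP => l; rewrite coef0.
case: (ltnP l Lq) => hl; last by rewrite nth_default // (leq_trans (hs j)).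
have := congr1 (fun M : 'rV_(Lq * n) => M 0 (mxvec_index (Ordinal hl) j)) hv.
by rewrite /= mxvecE mxE mxE.
Qed.

Section Expand.
Variables (K : comNzRingType) (nx nu ny : nat) (A : 'M[K]_nx) (B : 'M[K]_(nx, nu))
  (Cm : 'M[K]_(ny, nx)) (D : 'M[K]_(ny, nu)).

Definition xiC (zeta : nat -> 'rV[K]_ny) L0 : 'rV[K]_nx :=
  \sum_(t < L0) zeta t *m Cm *m A ^+ t.
Definition etaC (zeta : nat -> 'rV[K]_ny) L0 (s : nat) : 'rV[K]_nu :=
  zeta s *m D + \sum_(t < L0 | (s < t)%N) zeta t *m Cm *m A ^+ (t - s.+1) *m B.

Variables (x : nat -> 'cV[K]_nx) (u : nat -> 'cV[K]_nu) (y : nat -> 'cV[K]_ny) (N : nat).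
Hypothesis hx : forall k, (k.+2 <= N)%N -> x k.+1 = A *m x k + B *m u k.
Hypothesis hy : forall k, (k < N)%N -> y k = Cm *m x k + D *m u k.

Lemma state_exp t : (t < N)%N ->
  x t = A ^+ t *m x 0 + \sum_(s < t) A ^+ (t - s.+1) *m B *m u s.
Proof.
elim: t => [|t IH] ht; first by rewrite expr0 mul1mx big_ord0 addr0.
rewrite hx // IH ?(ltnW ht) // mulmxDr mulmxA big_ord_recr /= subnn expr0 mul1mx.
rewrite mulmx_sumr addrA; congr (_ + _ + _).
  by rewrite exprS.
apply: eq_bigr => s _; rewrite !mulmxA -[A *m _]/(A * _) -exprS subSn //.
Qed.

Lemma out_exp (zeta : nat -> 'rV[K]_ny) L0 : (L0 <= N)%N ->
  \sum_(t < L0) zeta t *m y t = xiC zeta L0 *m x 0 + \sum_(s < L0) etaC zeta L0 s *m u s.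
Proof.
move=> hL.
pose F (t s : nat) := zeta t *m Cm *m A ^+ (t - s.+1) *m B *m u s.
rewrite (eq_bigr (fun t : 'I_L0 => zeta t *m Cm *m A ^+ t *m x 0 +
   \sum_(s < L0 | (s < t)%N) F t s + zeta t *m D *m u t)); last first.
  move=> t _; have ht : (t < N)%N := leq_trans (ltn_ord t) hL.
  rewrite hy // state_exp // !mulmxDr !mulmxA; congr (_ + _ + _).
  rewrite (big_ord_widen L0 (fun s => A ^+ (t - s.+1) *m B *m u s) (ltnW (ltn_ord t))).
  rewrite mulmx_sumr; apply: eq_bigr => s _; by rewrite /F !mulmxA.
rewrite !big_split /= /xiC mulmx_suml -addrA; congr (_ + _).
rewrite /etaC.
under [in RHS]eq_bigr => s _ do rewrite mulmxDl mulmx_suml.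
rewrite big_split /= addrC; congr (_ + _).
under eq_bigr => t _ do rewrite big_mkcond.
rewrite exchange_big /=; apply: eq_bigr => s _; rewrite [RHS]big_mkcond.
by apply: eq_bigr => t _; case: ifP.
Qed.
End Expand.

Definition vrow (K : nmodType) L n (v : 'rV[K]_(L * n)) (t : nat) : 'rV[K]_n :=
  \row_p (match (insub t : option 'I_L) with Some l => v 0 (mxvec_index l p) | None => 0 end).
Lemma stack_dot' (K : pzRingType) L n (v : 'rV[K]_(L * n)) x :
  v *m stack L x 0 = \sum_(l < L) vrow v l *m x l.
Proof.
rewrite stack_dot; apply: eq_bigr => l _; congr (_ *m _).
by apply/rowP => p; rewrite !mxE valK.
Qed.

Lemma col_mulmx (K : pzRingType) m n p (A : 'M[K]_(m, n)) (B : 'M[K]_(n, p)) j :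
  col j (A *m B) = A *m col j B.
Proof. by apply/colP => i; rewrite !mxE; apply: eq_bigr => k _; rewrite !mxE. Qed.

Lemma cmx_xiC nx ny (A : 'M[R]_nx) (Cm : 'M[R]_(ny, nx)) zeta L0 :
  cmx (xiC A Cm zeta L0) = xiC (cmx A) (cmx Cm) (fun t => cmx (zeta t)) L0.
Proof. by rewrite /xiC cmx_sum; apply: eq_bigr => t _; rewrite !cmxM cmxX. Qed.

Lemma cmx_etaC nx nu ny (A : 'M[R]_nx) B (Cm : 'M[R]_(ny, nx)) (D : 'M[R]_(ny, nu)) zeta L0 s :
  cmx (etaC A B Cm D zeta L0 s) = etaC (cmx A) (cmx B) (cmx Cm) (cmx D) (fun t => cmx (zeta t)) L0 s.
Proof.
rewrite /etaC cmxD cmx_sum cmxM; congr (_ + _).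
by apply: eq_bigr => t _; rewrite !cmxM cmxX.
Qed.

Lemma obs n ny (A : 'M[R]_n) (Cm : 'M[R]_(ny, n)) (d : 'cV[R]_n) :
  (forall k, (k < n)%N -> Cm *m A ^+ k *m d = 0) -> forall k, Cm *m A ^+ k *m d = 0.
Proof.
move=> h.
have CH : A ^+ n = - \sum_(s < n) (char_poly A)`_s *: A ^+ s.
  have := hmx_CH A; rewrite /hmx size_char_poly big_ord_recr /=.
  have -> : (char_poly A)`_n = 1.
    by have := monicP (char_poly_monic A); rewrite lead_coefE size_char_poly.

  by rewrite scale1r => /eqP; rewrite addrC addr_eq0 => /eqP.
elim/ltn_ind => k IH.
case: (ltnP k n) => hk; first exact: h.
rewrite -(subnK hk) exprD CH -[_ * _]/(_ *m _) mulmxN mulmx_sumr mulmxN mulmx_sumr.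
rewrite mulNmx mulmx_suml big1 ?oppr0 // => s _.
rewrite -scalemxAr -scalemxAr -scalemxAl -[A ^+ _ *m A ^+ _]/(A ^+ _ * A ^+ _) -exprD.
by rewrite IH ?scaler0 //; have := ltn_ord s; lia.
Qed.

Lemma reM0 m n : reM (0 : 'M[C]_(m, n)) = 0.
Proof. by apply/matrixP => i j; rewrite !mxE. Qed.
Lemma reM_sum m n (I : Type) (r : seq I) (P : pred I) (F : I -> 'M[C]_(m, n)) :
  reM (\sum_(i <- r | P i) F i) = \sum_(i <- r | P i) reM (F i).
Proof. exact: (big_morph _ (@reMD m n) (@reM0 m n)). Qed.
Lemma sum_widen (K : nmodType) L0 L (hL : (L0 <= L)%N) (f : nat -> K) :
  \sum_(s < L0) f s = \sum_(s < L) (if (s < L0)%N then f s else 0).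
Proof. by rewrite (big_ord_widen L f hL) big_mkcond. Qed.
Lemma col_zero (K : nmodType) m n (j : 'I_n) : col j (0 : 'M[K]_(m, n)) = 0.
Proof. by apply/colP => k; rewrite !mxE. Qed.
End Aux.

Theorem proposition1 (R : realType) (nx nu ny : nat)
  (A : 'M[R]_nx) (B : 'M[R]_(nx, nu)) (Cm : 'M[R]_(ny, nx)) (D : 'M[R]_(ny, nu))
  (hctrb : controllable A B)
  (Q M : nat) (hQ : (1 <= Q)%N) (hM : (1 <= M)%N)
  (w : 'I_M -> R) (hw : forall m, 0 <= w m < pi)
  (Ud : 'I_Q -> R -> 'cV[R[i]]_nu) (Yd : 'I_Q -> R -> 'cV[R[i]]_ny)
  (hspec : forall i, io_spectrum A B Cm D (Ud i) (Yd i))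
  (L0 L : nat) (hL0 : (nx <= L0)%N) (hL : (L0 <= L)%N)
  (hCPE : CPE (L + nx) (fun i m => Ud i (w m)) w)
  (uini : nat -> 'cV[R]_nu) (yini : nat -> 'cV[R]_ny)
  (hini : io_trajectory A B Cm D L0 uini yini)
  (u : nat -> 'cV[R]_nu) (y : nat -> 'cV[R]_ny)
  (htraj : io_trajectory A B Cm D L u y)
  (hagree : forall k, (k < L0)%N -> u k = uini k /\ y k = yini k) :
  let Gu := GammaL L (fun i m => Ud i (w m)) w in
  let GyL0 := GammaL L0 (fun i m => Yd i (w m)) w in
  let GyL := GammaL L (fun i m => Yd i (w m)) w in
  let lhs := col_mx (stack L (fun k => if (k < L0)%N then uini k else u k) 0)
                    (stack L0 yini 0) in
  (exists g, lhs = col_mx Gu GyL0 *m g) /\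
  (forall g, lhs = col_mx Gu GyL0 *m g -> stack L y 0 = GyL *m g).
Proof.
move=> Gu GyL0 GyL lhs.
have hinW : forall m, inW (w m).
  move=> m; case/andP: (hw m) => h0 h1; rewrite /inW h1 andbT.
  by apply: le_trans h0; rewrite oppr_le0 ltW // pi_gt0.
have hX : forall i, { X : R -> 'cV[R[i]]_nx | forall w0, inW w0 ->
    expj w0 *: X w0 = cmx A *m X w0 + cmx B *m Ud i w0 /\
    Yd i w0 = cmx Cm *m X w0 + cmx D *m Ud i w0 }.
  move=> i; apply: constructive_indefinite_description.
  by case: (hspec i) => _ [_ [X [_ hX]]]; exists X.
pose Xf i m := proj1_sig (hX i) (w m).
pose Uf i m := Ud i (w m).
pose Yf i m := Yd i (w m).
have hdynf : forall i m, expj (w m) *: Xf i m = cmx A *m Xf i m + cmx B *m Uf i m.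
  by move=> i m; case: (proj2_sig (hX i) (w m) (hinW m)).
have houtf : forall i m, Yf i m = cmx Cm *m Xf i m + cmx D *m Uf i m.
  by move=> i m; case: (proj2_sig (hX i) (w m) (hinW m)).
case: htraj => x [hx hy].
have hlhs : lhs = col_mx (stack L u 0) (stack L0 y 0).
  rewrite /lhs; congr col_mx; apply: stack_ext => k hk /=.
    by case: ifP => // hk0; case: (hagree k hk0).
  by case: (hagree k hk).
split; last first.
  move=> g hg.
  have hGu : Gu *m g = stack L (traj w Uf g) 0 := Gmul w L Uf g.
  have hGy0 : GyL0 *m g = stack L0 (traj w Yf g) 0 := Gmul w L0 Yf g.
  have hGy : GyL *m g = stack L (traj w Yf g) 0 := Gmul w L Yf g.
  move: hg; rewrite hlhs mul_col_mx hGu hGy0 => /eq_col_mx [hu hyy].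
  have hu' := stack_inj hu; have hy' := stack_inj hyy.
  pose xg := traj w Xf g; pose ug := traj w Uf g; pose yg := traj w Yf g.
  have hxg k : xg k.+1 = A *m xg k + B *m ug k := traj_dyn g k hdynf.
  have hyg k : yg k = Cm *m xg k + D *m ug k := traj_out w g k houtf.
  pose d k := x k - xg k.
  have hd : forall k, (k < L)%N -> d k = A ^+ k *m d 0.
    elim => [|k IH] hk; first by rewrite expr0 mul1mx.
    rewrite /d hx // hxg hu' ?(ltnW hk) // opprD addrACA -/ug subrr addr0.
    rewrite -mulmxBr -/(d k) IH ?(ltnW hk) // mulmxA.
    by rewrite -[A *m A ^+ k]/(A * A ^+ k) -exprS.
  have hCd : forall k, (k < L)%N -> y k - yg k = Cm *m d k.
    by move=> k hk; rewrite hy // hyg hu' // -/ug opprD addrACA subrr addr0 -mulmxBr.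
  have hobs : forall k, (k < nx)%N -> Cm *m A ^+ k *m d 0 = 0.
    move=> k hk; have hk0 : (k < L0)%N := leq_trans hk hL0.
    have hkL : (k < L)%N := leq_trans hk0 hL.
    by rewrite -mulmxA -hd // -hCd // hy' // subrr.
  have hall := obs hobs.
  rewrite hGy; apply: stack_ext => k hk; rewrite add0n.
  by apply/eqP; rewrite -subr_eq0 hCd // hd // mulmxA hall.
pose e (p : 'I_Q * 'I_M) := expj (w p.2).
pose Up (p : 'I_Q * 'I_M) := Uf p.1 p.2.
pose Xp (p : 'I_Q * 'I_M) := Xf p.1 p.2.
have hdyn : forall p, e p *: Xp p = cmx A *m Xp p + cmx B *m Up p.
  by move=> p; exact: hdynf.
have hCPEp : forall P : 'I_nu -> {poly R}, (forall j, (size (P j) <= L + nx)%N) ->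
    (forall p, \sum_j ev (e p) (P j) * Up p j 0 = 0) -> forall j, P j = 0.
  move=> P hs h; apply: (CPE_poly hCPE hs) => i m; exact: (h (i, m)).
have key : forall r : 'rV_(L * nu + L0 * ny), r *m col_mx Gu GyL0 = 0 -> r *m lhs = 0.
  move=> r hr.
  pose r1 := lsubmx r; pose r2 := rsubmx r.
  have hr12 : r = row_mx r1 r2 by rewrite hsubmxK.
  pose eta := vrow r1; pose zeta := vrow r2.
  pose xiR := xiC A Cm zeta L0.
  pose eta' s := eta s + (if (s < L0)%N then etaC A B Cm D zeta L0 s else 0).
  pose Wf i m := \sum_(l < L) cmx (eta l) *m (expj (w m) ^+ l *: Uf i m) +
                 \sum_(l < L0) cmx (zeta l) *m (expj (w m) ^+ l *: Yf i m).
  have hcol : forall c, r *m col c (col_mx Gu GyL0) = reM (ph R c *: Wf (ci c) (cm c)).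
    move=> c; rewrite hr12 col_col_mx mul_row_col !colG !stack_dot' /Wf scalerDr reMD.
    rewrite !scaler_sumr !reM_sum.
    by congr (_ + _); apply: eq_bigr => l _; rewrite scalemxAr scalerA reM_cmx.
  have hW0 : forall i m, Wf i m 0 0 = 0.
    move=> i m.
    have h1 := hcol (lshift _ (rk i m)); have h2 := hcol (rshift _ (rk i m)).
    have [c1 c2 c3] := col_l R i m; have [d1 d2 d3] := col_r R i m.
    rewrite c1 c2 c3 -col_mulmx hr col_zero in h1.
    rewrite d1 d2 d3 -col_mulmx hr col_zero in h2.
    have := congr1 (fun M : 'cV_1 => M 0 0) h1; rewrite !mxE mul1r => h1'.
    have := congr1 (fun M : 'cV_1 => M 0 0) h2; rewrite !mxE -ImRe => h2'.
    by apply: complex_eq0; rewrite -?h1' -?h2'.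
  have hW : forall p, sx Xp xiR p + (\sum_(k < L) cmx (eta' k) *m (e p ^+ k *: Up p)) 0 0 = 0.
    case=> i m.
    pose xc t := expj (w m) ^+ t *: Xf i m.
    pose uc t := expj (w m) ^+ t *: Uf i m.
    pose yc t := expj (w m) ^+ t *: Yf i m.
    have hxc : forall k, (k.+2 <= L)%N -> xc k.+1 = cmx A *m xc k + cmx B *m uc k.
      move=> k _; rewrite /xc /uc exprSr -scalerA hdynf scalerDr.
      by rewrite -!scalemxAr.
    have hyc : forall k, (k < L)%N -> yc k = cmx Cm *m xc k + cmx D *m uc k.
      by move=> k _; rewrite /xc /uc /yc houtf scalerDr -!scalemxAr.
    have hox := out_exp hxc hyc (fun t => cmx (zeta t)) hL.
    rewrite -cmx_xiC /xc expr0 scale1r in hox.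
    have E : cmx xiR *m Xf i m + \sum_(k < L) cmx (eta' k) *m uc k = Wf i m.
      rewrite /Wf.
      rewrite -[\sum_(l < L0) cmx (zeta l) *m (expj (w m) ^+ l *: Yf i m)]/(\sum_(l < L0) cmx (zeta l) *m yc l).
      rewrite hox -/xiR.
      under [X in _ = _ + (_ + X)]eq_bigr => s _ do rewrite -cmx_etaC.
      rewrite (sum_widen hL (fun s => cmx (etaC A B Cm D zeta L0 s) *m uc s)).
      rewrite [RHS]addrCA; congr (_ + _); rewrite -big_split; apply: eq_bigr => k _ /=.
      by rewrite /eta' cmxD mulmxDl; case: ifP => _; rewrite ?cmx0 ?mul0mx.
    by rewrite -(hW0 i m) -E [in RHS]mxE.
  have heta' : forall k, (k < L)%N -> eta' k = 0 := ML hdyn hCPEp (leqnn _) hW.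
  have hsx : forall p, sx Xp xiR p = 0.
    move=> p; have := hW p; rewrite big1 ?mxE ?addr0 // => k _.
    by rewrite heta' // cmx0 mul0mx.
  have hxi : xiR = 0.
    case: (posnP L) => hL1.
      apply/rowP => j; exfalso; have := ltn_ord j; lia.
    have h1 : (1 + nx <= L + nx)%N by rewrite leq_add2r.
    exact: (ML2 hdyn hCPEp h1 hctrb hsx).
  have hox := out_exp hx hy zeta hL.
  rewrite hlhs hr12 mul_row_col !stack_dot' hox -/xiR hxi mul0mx add0r.
  rewrite (sum_widen hL (fun s => etaC A B Cm D zeta L0 s *m u s)) -big_split /=.
  apply: big1 => k _; have h0 := heta' k (ltn_ord k); rewrite /eta' in h0.
  rewrite -[RHS](mul0mx _ (u k)) -[in RHS]h0 mulmxDl.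
  by case: ifP => _; rewrite ?mul0mx.
set G := col_mx Gu GyL0 in key *.
have hsub : (lhs^T <= G^T)%MS.
  rewrite submxE; apply/eqP/matrixP => i j; rewrite (ord1 i) [RHS]mxE.
  have h0 : (col j (cokermx G^T))^T *m G = 0.
    by rewrite -[G in _ *m G]trmxK -trmx_mul -col_mulmx mulmx_coker col_zero trmx0.
  have := key _ h0; move/(congr1 trmx); rewrite trmx_mul trmxK trmx0 -col_mulmx.
  by move/(congr1 (fun M : 'cV_1 => M 0 0)); rewrite !mxE.
case/submxP: hsub => Dm hD; exists Dm^T.
by rewrite -[lhs]trmxK hD trmx_mul trmxK.
Qed.
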